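(* Let $\tilde{I} \approx Q_1$ via $\mathbf{S}_1$ and $\tilde{I} \approx Q_2$ via $\mathbf{S}_2$. If $Q_3 = Q_1 \circ Q_2$ via $\mathbf{B}$, then $\tilde{I} \approx Q_3$ via $\mathbf{S}_3$, where $\mathbf{S}_3$ satisfies the matrix equation \[ \mathbf{S}_3 \mathbf{B} = \mathbf{B}_0 ( \mathbf{S}_1 \otimes \mathbf{S}_2 ), \] where \[ \mathbf{B}_0 = \left[ \begin{array}{cccc} 1 & 0 & 0 & D- \lambda^2 \\ 0 & 1 & 1 & 2 \lambda \end{array} \right] \] and $\lambda = [ \sqrt D ]$.
   Context: All forms are properly primitive indefinite integral binary quadratic forms of determinant $D = b^2 - ac > 0$ (not a square), where a form $Q=[a,2b,c]$ is $Q(x_1,x_2) = ax_1^2+2bx_1x_2+cx_2^2 = \mathbf{x}^t \mathbf{Q}\mathbf{x}$ with symmetric matrix $\mathbf{Q} = \left[\begin{array}{cc} a & b\\ b & c\end{array}\right]$. Two forms satisfy $Q_1 \approx Q_2$ via an integer $2\times 2$ matrix $\mathbf{S}$ with $\det \mathbf{S}=1$ if $\mathbf{S}^t \mathbf{Q}_1 \mathbf{S} = \mathbf{Q}_2$. The identity form is $I=[1,0,-D]$, and the reduced identity form $\tilde{I} = [1, 2\lambda, \mu]$ is defined by $I \approx \tilde{I}$ via $\left[\begin{array}{cc} 1 & \lambda \\ 0 & 1\end{array}\right]$ with $\lambda = [\sqrt D]$. A form $Q_3$ is composed of $Q_1$ and $Q_2$ via a $2\times 4$ bilinear matrix $\mathbf{B}$,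 written $Q_3 = Q_1 \circ Q_2$, if $\mathbf{x}^t \mathbf{Q}_1 \mathbf{x}\, \mathbf{y}^t \mathbf{Q}_2 \mathbf{y} = \mathbf{z}^t \mathbf{B}^t \mathbf{Q}_3 \mathbf{B} \mathbf{z}$ identically, where $\mathbf{x}^t=[x_1,x_2]$, $\mathbf{y}^t=[y_1,y_2]$, $\mathbf{z}^t = [x_1y_1, x_1y_2, x_2y_1, x_2y_2]$, and $\mathbf{B}=[b_{ij}]$ is unimodular (its six $2\times 2$ minors $\Delta_{ij}$ formed from columns $i<j$ have gcd 1) and oriented ($a_1\Delta_{12}>0$, $a_2\Delta_{13}>0$ where $a_1,a_2$ are the first coefficients of $Q_1,Q_2$). $\mathbf{S}_1 \otimes \mathbf{S}_2$ denotes the Kronecker product. *)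

(* Defs.v *)
From HB Require Import structures.
From mathcomp Require Import all_boot all_order all_algebra.
From Stdlib Require Import PeanoNat.
Set Implicit Arguments. Unset Strict Implicit. Unset Printing Implicit Defensive.
Import Order.TTheory GRing.Theory Num.Theory.
Local Open Scope ring_scope.

Definition mx22 (a b c d : int) : 'M[int]_2 :=
  \matrix_(i < 2, j < 2)
    if (i : nat) == 0%N then (if (j : nat) == 0%N then a else b)
    else (if (j : nat) == 0%N then c else d).

(* symmetric matrix of the form Q = [a, 2b, c] *)
Definition formmx (a b c : int) : 'M[int]_2 := mx22 a b b c.

Definition fdet (Q : 'M[int]_2) : int := Q 0 1 ^+ 2 - Q 0 0 * Q 1 1.

Definition pp_form (D : int) (Q : 'M[int]_2) : Prop :=
  Q^T = Q /\ fdet Q = D /\ gcdz (gcdz (Q 0 0) (2 * Q 0 1)) (Q 1 1) = 1.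

Definition equiv_via (Q1 Q2 S : 'M[int]_2) : Prop :=
  \det S = 1 /\ S^T *m Q1 *m S = Q2.

Definition lam (D : int) : int := (Nat.sqrt `|D|%N)%:Z.

Definition Iform (D : int) : 'M[int]_2 := formmx 1 0 (- D).

Definition Itilde (D : int) : 'M[int]_2 :=
  (mx22 1 (lam D) 0 1)^T *m Iform D *m mx22 1 (lam D) 0 1.

Definition kron (m1 n1 m2 n2 : nat)
  (A : 'M[int]_(m1.+1, n1.+1)) (B : 'M[int]_(m2.+1, n2.+1))
  : 'M[int]_(m1.+1 * m2.+1, n1.+1 * n2.+1) :=
  \matrix_(i, j) (A (inord (i %/ m2.+1)) (inord (j %/ n2.+1)) *
                  B (inord (i %% m2.+1)) (inord (j %% n2.+1))).

Definition minor24 (B : 'M[int]_(2, 4)) (i j : 'I_4) : int :=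
  B 0 i * B 1 j - B 0 j * B 1 i.

Definition c0 : 'I_4 := inord 0.
Definition c1 : 'I_4 := inord 1.
Definition c2 : 'I_4 := inord 2.
Definition c3 : 'I_4 := inord 3.

Definition unimodular24 (B : 'M[int]_(2, 4)) : Prop :=
  gcdz (gcdz (gcdz (minor24 B c0 c1) (minor24 B c0 c2))
             (gcdz (minor24 B c0 c3) (minor24 B c1 c2)))
       (gcdz (minor24 B c1 c3) (minor24 B c2 c3)) = 1.

Definition composed (Q1 Q2 Q3 : 'M[int]_2) (B : 'M[int]_(2, 4)) : Prop :=
  [/\ forall x y : 'cV[int]_2,
        (x^T *m Q1 *m x) 0 0 * (y^T *m Q2 *m y) 0 0 =
        ((kron x y)^T *m B^T *m Q3 *m B *m kron x y) 0 0,
      unimodular24 B,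
      0 < Q1 0 0 * minor24 B c0 c1 &
      0 < Q2 0 0 * minor24 B c0 c2].

Definition B0 (D : int) : 'M[int]_(2, 4) :=
  \matrix_(i < 2, j < 4)
    nth 0 (nth [::] [:: [:: 1; 0; 0; D - lam D ^+ 2]; [:: 0; 1; 1; 2 * lam D]] i) j.

(* Main.v *)
Require Import Defs.
From mathcomp Require Import all_boot all_order all_algebra.
From mathcomp Require Import ring zify.
Import Order.TTheory GRing.Theory Num.Theory.
Local Open Scope ring_scope.

Definition qf (a b c u v : int) := a * u ^+ 2 + 2 * b * u * v + c * v ^+ 2.

Lemma sq_sign {d a : int} : d ^+ 2 = a ^+ 2 -> 0 < a * d -> d = a.
Proof.
move=> h1 h2.
have : (d - a) * (d + a) = 0.
  have -> : (d - a) * (d + a) = d ^+ 2 - a ^+ 2 by ring.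
  by rewrite h1 subrr.
move/eqP; rewrite mulf_eq0 => /orP[]; first by rewrite subr_eq0 => /eqP.
rewrite addr_eq0 => /eqP da; move: h2; rewrite da mulrN oppr_gt0.
by rewrite ltNge -expr2 sqr_ge0.
Qed.

Lemma gram {a3 b3 c3 a b c D Q u1 u2 v1 v2 : int} :
  D != 0 -> b3 ^+ 2 - a3 * c3 = D -> b ^+ 2 - a * c = D ->
  qf a3 b3 c3 u1 u2 = a * Q -> qf a3 b3 c3 v1 v2 = c * Q ->
  qf a3 b3 c3 (u1 + v1) (u2 + v2) = (a + 2 * b + c) * Q ->
  (u1 * v2 - v1 * u2) ^+ 2 = Q ^+ 2.
Proof.
move=> D0 hD3 hD hu hv huv.
have e1 : -4 * (b3 ^+ 2 - a3 * c3) * (u1 * v2 - v1 * u2) ^+ 2 =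
   4 * qf a3 b3 c3 u1 u2 * qf a3 b3 c3 v1 v2 -
   (qf a3 b3 c3 (u1 + v1) (u2 + v2) - qf a3 b3 c3 u1 u2 - qf a3 b3 c3 v1 v2) ^+ 2.
  by rewrite /qf; ring.
rewrite hD3 hu hv huv in e1.
have e2 : -4 * D * (u1 * v2 - v1 * u2) ^+ 2 = -4 * D * Q ^+ 2.
  by rewrite e1 -hD; ring.
apply: (mulfI _ e2).
by rewrite mulf_neq0.
Qed.

Lemma sqpoly {al be ga a b c : int} : a != 0 -> al = a ->
  (forall t, (al * t ^+ 2 + be * t + ga) ^+ 2 = (a * t ^+ 2 + b * t + c) ^+ 2) ->
  be = b /\ ga = c.
Proof.
move=> a0 -> H.
pose h t := (a * t ^+ 2 + be * t + ga) ^+ 2 - (a * t ^+ 2 + b * t + c) ^+ 2.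
have h0 t : h t = 0 by rewrite /h H subrr.
have E1 : 12 * a * (be - b) = h 2 - 3 * h 1 - h (-1) + 3 * h 0 by rewrite /h; ring.
rewrite !h0 in E1.
have eb : be = b.
  apply/eqP; rewrite -subr_eq0; apply/eqP.
  move/eqP: E1; rewrite !mulr0 ?subr0 ?addr0 ?subrr ?add0r !mulf_eq0 /= (negbTE a0) /=.
  by move/eqP.
split=> //.
have E2 : 4 * a * (ga - c) = h 1 + h (-1) - 2 * h 0 by rewrite /h eb; ring.
rewrite !h0 in E2.
apply/eqP; rewrite -subr_eq0; apply/eqP.
move/eqP: E2; rewrite !mulr0 ?subr0 ?addr0 ?subrr ?add0r !mulf_eq0 /= (negbTE a0) /=.
by move/eqP.
Qed.

Lemma minorsB {D a1 b1 c1 a2 b2 c2 a3 b3 c3 x0 x1 x2 x3 y0 y1 y2 y3 : int} :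
  D != 0 -> b1 ^+ 2 - a1 * c1 = D -> b2 ^+ 2 - a2 * c2 = D ->
  b3 ^+ 2 - a3 * c3 = D ->
  (forall u1 u2 v1 v2, qf a1 b1 c1 u1 u2 * qf a2 b2 c2 v1 v2 =
     qf a3 b3 c3 (u1 * v1 * x0 + u1 * v2 * x1 + u2 * v1 * x2 + u2 * v2 * x3)
                 (u1 * v1 * y0 + u1 * v2 * y1 + u2 * v1 * y2 + u2 * v2 * y3)) ->
  0 < a1 * (x0 * y1 - x1 * y0) -> 0 < a2 * (x0 * y2 - x2 * y0) ->
  (x0 * y1 - x1 * y0 = a1 /\ x0 * y2 - x2 * y0 = a2) /\
  (x0 * y3 - x3 * y0 = b1 + b2 /\ x1 * y2 - x2 * y1 = b2 - b1) /\
  (x1 * y3 - x3 * y1 = c2 /\ x2 * y3 - x3 * y2 = c1).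
Proof.
move=> D0 hD1 hD2 hD3 H o1 o2.
have a10 : a1 != 0 by apply: contraTneq o1 => ->; rewrite mul0r ltxx.
have a20 : a2 != 0 by apply: contraTneq o2 => ->; rewrite mul0r ltxx.
have G2 v1 v2 : ((v1 * x0 + v2 * x1) * (v1 * y2 + v2 * y3)
               - (v1 * x2 + v2 * x3) * (v1 * y0 + v2 * y1)) ^+ 2
               = (qf a2 b2 c2 v1 v2) ^+ 2.
  apply: (gram D0 hD3 hD1).
  - have := H 1 0 v1 v2; have -> : qf a1 b1 c1 1 0 = a1 by rewrite /qf; ring.
    by move=> ->; congr qf; ring.
  - have := H 0 1 v1 v2; have -> : qf a1 b1 c1 0 1 = c1 by rewrite /qf; ring.
    by move=> ->; congr qf; ring.
  - have := H 1 1 v1 v2; have -> : qf a1 b1 c1 1 1 = a1 + 2 * b1 + c1 by rewrite /qf; ring.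
    by move=> ->; congr qf; ring.
have G1 u1 u2 : ((u1 * x0 + u2 * x2) * (u1 * y1 + u2 * y3)
               - (u1 * x1 + u2 * x3) * (u1 * y0 + u2 * y2)) ^+ 2
               = (qf a1 b1 c1 u1 u2) ^+ 2.
  apply: (gram D0 hD3 hD2).
  - have := H u1 u2 1 0; have -> : qf a2 b2 c2 1 0 = a2 by rewrite /qf; ring.
    by rewrite mulrC => ->; congr qf; ring.
  - have := H u1 u2 0 1; have -> : qf a2 b2 c2 0 1 = c2 by rewrite /qf; ring.
    by rewrite mulrC => ->; congr qf; ring.
  - have := H u1 u2 1 1; have -> : qf a2 b2 c2 1 1 = a2 + 2 * b2 + c2 by rewrite /qf; ring.
    by rewrite mulrC => ->; congr qf; ring.
have m02 : x0 * y2 - x2 * y0 = a2.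
  apply: sq_sign o2; have := G2 1 0.
  have -> : qf a2 b2 c2 1 0 = a2 by rewrite /qf; ring.
  by move=> <-; congr (_ ^+ 2); ring.
have m01 : x0 * y1 - x1 * y0 = a1.
  apply: sq_sign o1; have := G1 1 0.
  have -> : qf a1 b1 c1 1 0 = a1 by rewrite /qf; ring.
  by move=> <-; congr (_ ^+ 2); ring.
have [e2 f2] : (x0 * y3 - x3 * y0) + (x1 * y2 - x2 * y1) = 2 * b2 /\
          x1 * y3 - x3 * y1 = c2.
  apply: (sqpoly a20 m02) => t; have := G2 t 1.
  have -> : qf a2 b2 c2 t 1 = a2 * t ^+ 2 + 2 * b2 * t + c2 by rewrite /qf; ring.
  by move=> <-; ring.
have [e1 f1] : (x0 * y3 - x3 * y0) - (x1 * y2 - x2 * y1) = 2 * b1 /\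
          x2 * y3 - x3 * y2 = c1.
  apply: (sqpoly a10 m01) => t; have := G1 t 1.
  have -> : qf a1 b1 c1 t 1 = a1 * t ^+ 2 + 2 * b1 * t + c1 by rewrite /qf; ring.
  by move=> <-; ring.
by do ![split] => //; lia.
Qed.

Definition bb (l mu e f g h : int) := e * f + l * (e * h + f * g) + mu * g * h.
Definition mnr (X Y : nat -> int) (i j : nat) := X i * Y j - X j * Y i.
Definition Zc (X : nat -> int) (u1 u2 v1 v2 : int) :=
  u1 * v1 * X 0%N + u1 * v2 * X 1%N + u2 * v1 * X 2%N + u2 * v2 * X 3%N.
Definition Sum6 (w : int * int * int * int * int * int) (F : nat -> nat -> int) :=
  let: (u01, u02, u03, u12, u13, u23) := w in
  u01 * F 0%N 1%N + u02 * F 0%N 2%N + u03 * F 0%N 3%N + u12 * F 1%N 2%N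
  + u13 * F 1%N 3%N + u23 * F 2%N 3%N.

Lemma Sum6_lin w F G a b :
  Sum6 w F * a + Sum6 w G * b = Sum6 w (fun i j => F i j * a + G i j * b).
Proof. by case: w => [[[[[? ?] ?] ?] ?] ?]; rewrite /Sum6; ring. Qed.

Lemma Sum6_eq w F G : (forall i j, (i < 4)%N -> (j < 4)%N -> F i j = G i j) ->
  Sum6 w F = Sum6 w G.
Proof. by case: w => [[[[[? ?] ?] ?] ?] ?] H; rewrite /Sum6 !H. Qed.

Lemma Sum6_mulr w F c : Sum6 w (fun i j => F i j * c) = Sum6 w F * c.
Proof. by case: w => [[[[[? ?] ?] ?] ?] ?]; rewrite /Sum6; ring. Qed.

Lemma cram {Xi Yi Xj Yj Xk Yk X'i Y'i X'j Y'j X'k Y'k : int} :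
  Xk * Yj - Xj * Yk = X'k * Y'j - X'j * Y'k ->
  Xi * Yk - Xk * Yi = X'i * Y'k - X'k * Y'i ->
  Xi * Yj - Xj * Yi = X'i * Y'j - X'j * Y'i ->
  (X'i * Yj - X'j * Yi) * Xk + (X'j * Xi - X'i * Xj) * Yk = (Xi * Yj - Xj * Yi) * X'k /\
  (Y'i * Yj - Y'j * Yi) * Xk + (Y'j * Xi - Y'i * Xj) * Yk = (Xi * Yj - Xj * Yi) * Y'k.
Proof.
move=> h1 h2 h3; split.
  have -> : (X'i * Yj - X'j * Yi) * Xk + (X'j * Xi - X'i * Xj) * Yk =
    X'i * (Xk * Yj - Xj * Yk) + X'j * (Xi * Yk - Xk * Yi) by ring.
  by rewrite h1 h2 h3; ring.
have -> : (Y'i * Yj - Y'j * Yi) * Xk + (Y'j * Xi - Y'i * Xj) * Yk =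
  Y'i * (Xk * Yj - Xj * Yk) + Y'j * (Xi * Yk - Xk * Yi) by ring.
by rewrite h1 h2 h3; ring.
Qed.

Lemma solveS (X Y X' Y' : nat -> int) w :
  (forall i j, (i < 4)%N -> (j < 4)%N -> mnr X Y i j = mnr X' Y' i j) ->
  Sum6 w (mnr X Y) = 1 ->
  exists e f g h : int, forall k, (k < 4)%N ->
    e * X k + f * Y k = X' k /\ g * X k + h * Y k = Y' k.
Proof.
move=> hm hw.
exists (Sum6 w (fun i j => X' i * Y j - X' j * Y i)),
       (Sum6 w (fun i j => X' j * X i - X' i * X j)),
       (Sum6 w (fun i j => Y' i * Y j - Y' j * Y i)),
       (Sum6 w (fun i j => Y' j * X i - Y' i * X j)).
move=> k hk; rewrite !Sum6_lin; split.
  rewrite (@Sum6_eq _ _ (fun i j => mnr X Y i j * X' k)) ?Sum6_mulr ?hw ?mul1r //.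
  move=> i j hi hj.
  by case: (cram (hm _ _ hk hj) (hm _ _ hi hk) (hm _ _ hi hj)).
rewrite (@Sum6_eq _ _ (fun i j => mnr X Y i j * Y' k)) ?Sum6_mulr ?hw ?mul1r //.
move=> i j hi hj.
by case: (cram (hm _ _ hk hj) (hm _ _ hi hk) (hm _ _ hi hj)).
Qed.

Lemma formzero {m0 m1 m2 X0 Y0 X1 Y1 : int} : X0 * Y1 - X1 * Y0 != 0 ->
  qf m0 m1 m2 X0 Y0 = 0 -> qf m0 m1 m2 X1 Y1 = 0 ->
  qf m0 m1 m2 (X0 + X1) (Y0 + Y1) = 0 -> [/\ m0 = 0, m1 = 0 & m2 = 0].
Proof.
move=> d0 q0 q1 q01.
have d20 : 2 * (X0 * Y1 - X1 * Y0) ^+ 2 != 0 by rewrite mulf_neq0 // expf_neq0.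
have E0 : m0 * (2 * (X0 * Y1 - X1 * Y0) ^+ 2) =
  2 * Y1 ^+ 2 * qf m0 m1 m2 X0 Y0
  - 2 * Y0 * Y1 * (qf m0 m1 m2 (X0 + X1) (Y0 + Y1) - qf m0 m1 m2 X0 Y0 - qf m0 m1 m2 X1 Y1)
  + 2 * Y0 ^+ 2 * qf m0 m1 m2 X1 Y1 by rewrite /qf; ring.
have E2 : m2 * (2 * (X0 * Y1 - X1 * Y0) ^+ 2) =
  2 * X1 ^+ 2 * qf m0 m1 m2 X0 Y0
  - 2 * X0 * X1 * (qf m0 m1 m2 (X0 + X1) (Y0 + Y1) - qf m0 m1 m2 X0 Y0 - qf m0 m1 m2 X1 Y1)
  + 2 * X0 ^+ 2 * qf m0 m1 m2 X1 Y1 by rewrite /qf; ring.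
have E1 : m1 * (2 * (X0 * Y1 - X1 * Y0) ^+ 2) =
  - 2 * X1 * Y1 * qf m0 m1 m2 X0 Y0
  + (X0 * Y1 + X1 * Y0) * (qf m0 m1 m2 (X0 + X1) (Y0 + Y1) - qf m0 m1 m2 X0 Y0 - qf m0 m1 m2 X1 Y1)
  - 2 * X0 * Y0 * qf m0 m1 m2 X1 Y1 by rewrite /qf; ring.
rewrite q0 q1 q01 !subrr !mulr0 ?subr0 ?addr0 in E0 E1 E2.
split; apply: (mulIf d20); rewrite mul0r.
- by rewrite E0.
- by rewrite E1.
- by rewrite E2.
Qed.

Lemma qf_sub a b c a' b' c' u v : qf (a - a') (b - b') (c - c') u v = qf a b c u v - qf a' b' c' u v.
Proof. by rewrite /qf; ring. Qed.

Lemma core (D l a1 b1 c1 a2 b2 c2 a3 b3 c3 : int) (X Y X' Y' : nat -> int) w :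
  D != 0 -> b1 ^+ 2 - a1 * c1 = D -> b2 ^+ 2 - a2 * c2 = D ->
  b3 ^+ 2 - a3 * c3 = D ->
  (forall u1 u2 v1 v2, qf a1 b1 c1 u1 u2 * qf a2 b2 c2 v1 v2 =
     qf a3 b3 c3 (Zc X u1 u2 v1 v2) (Zc Y u1 u2 v1 v2)) ->
  (forall u1 u2 v1 v2, qf a1 b1 c1 u1 u2 * qf a2 b2 c2 v1 v2 =
     qf 1 l (l ^+ 2 - D) (Zc X' u1 u2 v1 v2) (Zc Y' u1 u2 v1 v2)) ->
  (mnr X' Y' 0%N 1%N = a1 /\ mnr X' Y' 0%N 2%N = a2) /\
  (mnr X' Y' 0%N 3%N = b1 + b2 /\ mnr X' Y' 1%N 2%N = b2 - b1) /\
  (mnr X' Y' 1%N 3%N = c2 /\ mnr X' Y' 2%N 3%N = c1) ->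
  0 < a1 * mnr X Y 0%N 1%N -> 0 < a2 * mnr X Y 0%N 2%N ->
  Sum6 w (mnr X Y) = 1 ->
  exists e f g h : int,
    [/\ e * h - f * g = 1,
        (qf 1 l (l ^+ 2 - D) e g = a3 /\ bb l (l ^+ 2 - D) e f g h = b3 /\
         qf 1 l (l ^+ 2 - D) f h = c3) &
        forall k, (k < 4)%N -> e * X k + f * Y k = X' k /\ g * X k + h * Y k = Y' k].
Proof.
move=> D0 hD1 hD2 hD3 HB HB' hm' o1 o2 hw.
have a10 : a1 != 0 by apply: contraTneq o1 => ->; rewrite mul0r ltxx.
have hmB := minorsB D0 hD1 hD2 hD3 HB o1 o2.
have hm : forall i j, (i < 4)%N -> (j < 4)%N -> mnr X Y i j = mnr X' Y' i j.
  move: hmB hm'; rewrite /mnr.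
  move=> [[m01 m02] [[m03 m12] [m13 m23]]] [[n01 n02] [[n03 n12] [n13 n23]]].
  case=> [|[|[|[|i]]]] // [|[|[|[|j]]]] // _ _; lia.
have [e [f [g [h hS]]]] := @solveS _ _ _ _ _ hm hw.
exists e, f, g, h.
have [h0x h0y] := hS 0%N isT.
have [h1x h1y] := hS 1%N isT.
have [h2x h2y] := hS 2%N isT.
have [h3x h3y] := hS 3%N isT.
have m01 : mnr X Y 0%N 1%N = a1 by case: hmB => [[]].
have n01 : mnr X' Y' 0%N 1%N = a1 by case: hm' => [[]].
split=> //.
- have E : (e * h - f * g) * mnr X Y 0%N 1%N = mnr X' Y' 0%N 1%N.
    by rewrite /mnr -h0x -h0y -h1x -h1y; ring.
  rewrite m01 n01 in E.
  by apply: (mulIf a10); rewrite E mul1r.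
have gen u1 u2 v1 v2 :
  qf (qf 1 l (l ^+ 2 - D) e g) (bb l (l ^+ 2 - D) e f g h) (qf 1 l (l ^+ 2 - D) f h)
     (Zc X u1 u2 v1 v2) (Zc Y u1 u2 v1 v2) = qf a3 b3 c3 (Zc X u1 u2 v1 v2) (Zc Y u1 u2 v1 v2).
  rewrite -HB HB'.
  have -> : Zc X' u1 u2 v1 v2 = e * Zc X u1 u2 v1 v2 + f * Zc Y u1 u2 v1 v2.
    by rewrite /Zc -h0x -h1x -h2x -h3x; ring.
  have -> : Zc Y' u1 u2 v1 v2 = g * Zc X u1 u2 v1 v2 + h * Zc Y u1 u2 v1 v2.
    by rewrite /Zc -h0y -h1y -h2y -h3y; ring.
  by rewrite /qf /bb; ring.
have z0 (F : nat -> int) : Zc F 1 0 1 0 = F 0%N by rewrite /Zc; ring.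
have z1 (F : nat -> int) : Zc F 1 0 0 1 = F 1%N by rewrite /Zc; ring.
have z01 (F : nat -> int) : Zc F 1 0 1 1 = F 0%N + F 1%N by rewrite /Zc; ring.
have d0 : X 0%N * Y 1%N - X 1%N * Y 0%N != 0 by move: m01; rewrite /mnr => ->.
have := @formzero (qf 1 l (l ^+ 2 - D) e g - a3) (bb l (l ^+ 2 - D) e f g h - b3)
  (qf 1 l (l ^+ 2 - D) f h - c3) _ _ _ _ d0.
rewrite !qf_sub -(z01 X) -(z01 Y) -(z0 X) -(z0 Y) -(z1 X) -(z1 Y) !gen !subrr.
case=> // /eqP; rewrite subr_eq0 => /eqP -> /eqP; rewrite subr_eq0 => /eqP ->.
by move/eqP; rewrite subr_eq0 => /eqP ->.
Qed.

Definition cv2 (u v : int) : 'cV[int]_2 := \col_(i < 2) (if (i : nat) == 0%N then u else v).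
Definition mxB (X Y : nat -> int) : 'M[int]_(2, 4) :=
  \matrix_(i < 2, j < 4) (if (i : nat) == 0%N then X j else Y j).

Lemma mx22_eta (M : 'M[int]_2) : M = mx22 (M 0 0) (M 0 1) (M 1 0) (M 1 1).
Proof.
apply/matrixP => i j; rewrite mxE.
case: i => [[|[|//]] hi]; case: j => [[|[|//]] hj] /=; by f_equal; apply: val_inj.
Qed.

Lemma mxB_eta (B : 'M[int]_(2, 4)) :
  B = mxB (fun k => B 0 (inord k)) (fun k => B 1 (inord k)).
Proof.
apply/matrixP => i j; rewrite mxE inord_val.
case: i => [[|[|//]] hi] /=; by f_equal; apply: val_inj.
Qed.

Lemma Itilde_mx D : Itilde D = mx22 1 (lam D) (lam D) (lam D ^+ 2 - D).
Proof.
apply/matrixP => i j; rewrite /Itilde /Iform /formmx /mx22.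
rewrite !(mxE, big_ord_recr, big_ord0) /=.
by case: i => [[|[|//]] hi]; case: j => [[|[|//]] hj] /=; ring.
Qed.

Lemma conj_mx22 l mu p q r s :
  (mx22 p q r s)^T *m mx22 1 l l mu *m mx22 p q r s =
  mx22 (qf 1 l mu p r) (bb l mu p q r s) (bb l mu p q r s) (qf 1 l mu q s).
Proof.
apply/matrixP => i j; rewrite /mx22 /qf /bb.
rewrite !(mxE, big_ord_recr, big_ord0) /=.
by case: i => [[|[|//]] hi]; case: j => [[|[|//]] hj] /=; ring.
Qed.

Lemma det_mx22 p q r s : \det (mx22 p q r s) = p * s - q * r.
Proof.
rewrite (expand_det_row _ 0) !big_ord_recr big_ord0 /= /cofactor.
rewrite !det_mx11 !mxE /=.
by rewrite addn0 add0n expr0 expr1; ring.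
Qed.

Lemma qf_mx22 a b c u v : ((cv2 u v)^T *m mx22 a b b c *m cv2 u v) 0 0 = qf a b c u v.
Proof.
rewrite /cv2 /mx22 /qf.
rewrite !(mxE, big_ord_recr, big_ord0) /=.
ring.
Qed.

Lemma fdet_mx22 a b c : fdet (mx22 a b b c) = b ^+ 2 - a * c.
Proof. by rewrite /fdet !mxE. Qed.

Definition cX (mu s0 s1 t0 t1 : int) := s0 * t0 - mu * s1 * t1.
Definition cY (l s0 s1 t0 t1 : int) := s0 * t1 + s1 * t0 + 2 * l * s1 * t1.
Definition Xp (mu p1 q1 r1 s1 p2 q2 r2 s2 : int) (k : nat) :=
  match k with 0%N => cX mu p1 r1 p2 r2 | 1%N => cX mu p1 r1 q2 s2
  | 2%N => cX mu q1 s1 p2 r2 | _ => cX mu q1 s1 q2 s2 end.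
Definition Yp (l p1 q1 r1 s1 p2 q2 r2 s2 : int) (k : nat) :=
  match k with 0%N => cY l p1 r1 p2 r2 | 1%N => cY l p1 r1 q2 s2
  | 2%N => cY l q1 s1 p2 r2 | _ => cY l q1 s1 q2 s2 end.

Lemma B0kron D p1 q1 r1 s1 p2 q2 r2 s2 :
  B0 D *m kron (mx22 p1 q1 r1 s1) (mx22 p2 q2 r2 s2) =
  mxB (Xp (lam D ^+ 2 - D) p1 q1 r1 s1 p2 q2 r2 s2) (Yp (lam D) p1 q1 r1 s1 p2 q2 r2 s2).
Proof.
apply/matrixP => i j; rewrite /B0 /kron /mx22 /mxB /Xp /Yp /cX /cY.
change (2 * 2)%N with 4%N.
case: i => [[|[|//]] hi]; case: j => [[|[|[|[|//]]]] hj];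
  rewrite !(mxE, big_ord_recr, big_ord0) /= !inordK //=; ring.
Qed.

Lemma mul_mxB e f g h X Y X' Y' :
  (forall k, (k < 4)%N -> e * X k + f * Y k = X' k /\ g * X k + h * Y k = Y' k) ->
  mx22 e f g h *m mxB X Y = mxB X' Y'.
Proof.
move=> H; apply/matrixP => i j; rewrite /mx22 /mxB.
rewrite !(mxE, big_ord_recr, big_ord0) /=.
have [H1 H2] := H j (ltn_ord j).
by case: i => [[|[|//]] hi] /=; rewrite !add0r.
Qed.

Lemma minor_mxB X Y :
  (minor24 (mxB X Y) c0 c1 = mnr X Y 0%N 1%N /\ minor24 (mxB X Y) c0 c2 = mnr X Y 0%N 2%N) /\
  (minor24 (mxB X Y) c0 c3 = mnr X Y 0%N 3%N /\ minor24 (mxB X Y) c1 c2 = mnr X Y 1%N 2%N) /\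
  (minor24 (mxB X Y) c1 c3 = mnr X Y 1%N 3%N /\ minor24 (mxB X Y) c2 c3 = mnr X Y 2%N 3%N).
Proof. by rewrite /minor24 /mnr /c0 /c1 /c2 /c3 !mxE /= !inordK. Qed.

Lemma gcd_Sum6 X Y : unimodular24 (mxB X Y) -> exists w, Sum6 w (mnr X Y) = 1.
Proof.
rewrite /unimodular24.
have [[m01 m02] [[m03 m12] [m13 m23]]] := minor_mxB X Y.
rewrite m01 m02 m03 m12 m13 m23.
have [u [v e]] := Bezoutz (gcdz (gcdz (mnr X Y 0%N 1%N) (mnr X Y 0%N 2%N)) (gcdz (mnr X Y 0%N 3%N) (mnr X Y 1%N 2%N))) (gcdz (mnr X Y 1%N 3%N) (mnr X Y 2%N 3%N)).
have [u1 [v1 e1]] := Bezoutz (gcdz (mnr X Y 0%N 1%N) (mnr X Y 0%N 2%N)) (gcdz (mnr X Y 0%N 3%N) (mnr X Y 1%N 2%N)).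
have [u2 [v2 e2]] := Bezoutz (mnr X Y 0%N 1%N) (mnr X Y 0%N 2%N).
have [u3 [v3 e3]] := Bezoutz (mnr X Y 0%N 3%N) (mnr X Y 1%N 2%N).
have [u4 [v4 e4]] := Bezoutz (mnr X Y 1%N 3%N) (mnr X Y 2%N 3%N).
rewrite -e -e1 -e2 -e3 -e4 => hg.
exists (u * u1 * u2, u * u1 * v2, u * v1 * u3, u * v1 * v3, v * u4, v * v4).
by rewrite -hg /Sum6; ring.
Qed.

Lemma qB (X Y : nat -> int) a b c u1 u2 v1 v2 :
 ((kron (cv2 u1 u2) (cv2 v1 v2))^T *m (mxB X Y)^T *m mx22 a b b c *m mxB X Y
   *m kron (cv2 u1 u2) (cv2 v1 v2)) 0 0
 = qf a b c (Zc X u1 u2 v1 v2) (Zc Y u1 u2 v1 v2).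
Proof.
rewrite /kron /mxB /cv2 /mx22 /qf /Zc.
change (2 * 2)%N with 4%N; change (1 * 1)%N with 1%N.
rewrite !(mxE, big_ord_recr, big_ord0) /=.
rewrite !inordK //=.
ring.
Qed.


Lemma mul1_tr {d x y : int} : d = 1 -> x = y * d -> x = y.
Proof. by move=> -> ->; rewrite mulr1. Qed.
Lemma mul2_tr {d e x y z : int} : d = 1 -> e = 1 -> x = y * d + z * e -> x = y + z.
Proof. by move=> -> -> ->; rewrite !mulr1. Qed.
Lemma mul3_tr {d e x y z : int} : d = 1 -> e = 1 -> x = y * d - z * e -> x = y - z.
Proof. by move=> -> -> ->; rewrite !mulr1. Qed.

Lemma Bp_facts l D p1 q1 r1 s1 p2 q2 r2 s2 :
  p1 * s1 - q1 * r1 = 1 -> p2 * s2 - q2 * r2 = 1 ->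
  (forall u1 u2 v1 v2,
     qf (qf 1 l (l ^+ 2 - D) p1 r1) (bb l (l ^+ 2 - D) p1 q1 r1 s1) (qf 1 l (l ^+ 2 - D) q1 s1) u1 u2 *
     qf (qf 1 l (l ^+ 2 - D) p2 r2) (bb l (l ^+ 2 - D) p2 q2 r2 s2) (qf 1 l (l ^+ 2 - D) q2 s2) v1 v2 =
     qf 1 l (l ^+ 2 - D) (Zc (Xp (l ^+ 2 - D) p1 q1 r1 s1 p2 q2 r2 s2) u1 u2 v1 v2)
                       (Zc (Yp l p1 q1 r1 s1 p2 q2 r2 s2) u1 u2 v1 v2)) /\
  let X' := Xp (l ^+ 2 - D) p1 q1 r1 s1 p2 q2 r2 s2 in
  let Y' := Yp l p1 q1 r1 s1 p2 q2 r2 s2 in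
  (mnr X' Y' 0%N 1%N = qf 1 l (l ^+ 2 - D) p1 r1 /\ mnr X' Y' 0%N 2%N = qf 1 l (l ^+ 2 - D) p2 r2) /\
  (mnr X' Y' 0%N 3%N = bb l (l ^+ 2 - D) p1 q1 r1 s1 + bb l (l ^+ 2 - D) p2 q2 r2 s2 /\
   mnr X' Y' 1%N 2%N = bb l (l ^+ 2 - D) p2 q2 r2 s2 - bb l (l ^+ 2 - D) p1 q1 r1 s1) /\
  (mnr X' Y' 1%N 3%N = qf 1 l (l ^+ 2 - D) q2 s2 /\ mnr X' Y' 2%N 3%N = qf 1 l (l ^+ 2 - D) q1 s1).
Proof.
move=> d1 d2.
split.
  move=> u1 u2 v1 v2.
  rewrite /Zc /Xp /Yp /cX /cY /qf /bb /=; ring.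
move=> X' Y'; rewrite /X' /Y' /mnr /Xp /Yp /=.
split; [split|split; [split|split]].
- by apply: (mul1_tr d2); rewrite /qf /cX /cY; ring.
- by apply: (mul1_tr d1); rewrite /qf /cX /cY; ring.
- by apply: (mul2_tr d2 d1); rewrite /bb /cX /cY; ring.
- by apply: (mul3_tr d1 d2); rewrite /bb /cX /cY; ring.
- by apply: (mul1_tr d1); rewrite /qf /cX /cY; ring.
- by apply: (mul1_tr d2); rewrite /qf /cX /cY; ring.
Qed.

Theorem lemma6p2 (D : int) (Q1 Q2 Q3 S1 S2 : 'M[int]_2) (B : 'M[int]_(2, 4)) :
  0 < D -> (forall r : int, r ^+ 2 != D) ->
  pp_form D Q1 -> pp_form D Q2 -> pp_form D Q3 ->
  equiv_via (Itilde D) Q1 S1 -> equiv_via (Itilde D) Q2 S2 ->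
  composed Q1 Q2 Q3 B ->
  exists S3 : 'M[int]_2,
    equiv_via (Itilde D) Q3 S3 /\ S3 *m B = B0 D *m kron S1 S2.
Proof.
move=> Dpos _ [_ [fQ1 _]] [_ [fQ2 _]] [sQ3 [fQ3 _]] [dS1 eS1] [dS2 eS2] [Hc uB o1 o2].
have D0 : D != 0 by rewrite gt_eqF.
have [p1 [q1 [r1 [s1 E1]]]] : exists p q r s, S1 = mx22 p q r s.
  by exists (S1 0 0), (S1 0 1), (S1 1 0), (S1 1 1); exact: mx22_eta.
have [p2 [q2 [r2 [s2 E2]]]] : exists p q r s, S2 = mx22 p q r s.
  by exists (S2 0 0), (S2 0 1), (S2 1 0), (S2 1 1); exact: mx22_eta.
have [a3 [b3 [c3 E3]]] : exists a b c, Q3 = mx22 a b b c.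
  exists (Q3 0 0), (Q3 0 1), (Q3 1 1).
  rewrite {1}(mx22_eta Q3); congr mx22.
  by rewrite -{1}sQ3 mxE.
have [X [Y EB]] : exists X Y, B = mxB X Y by eexists; eexists; exact: mxB_eta.
subst S1 S2 Q3 B.
rewrite Itilde_mx conj_mx22 in eS1; rewrite Itilde_mx conj_mx22 in eS2.
subst Q1 Q2.
rewrite det_mx22 in dS1; rewrite det_mx22 in dS2.
rewrite fdet_mx22 in fQ1; rewrite fdet_mx22 in fQ2; rewrite fdet_mx22 in fQ3.
rewrite !mxE /= in o1; rewrite !mxE /= in o2.
have [[m01 m02] [[m03 m12] [m13 m23]]] := minor_mxB X Y.
rewrite m01 in o1; rewrite m02 in o2.
have [w hw] := gcd_Sum6 _ _ uB.
have HB u1 u2 v1 v2 :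
  qf (qf 1 (lam D) (lam D ^+ 2 - D) p1 r1) (bb (lam D) (lam D ^+ 2 - D) p1 q1 r1 s1)
     (qf 1 (lam D) (lam D ^+ 2 - D) q1 s1) u1 u2 *
  qf (qf 1 (lam D) (lam D ^+ 2 - D) p2 r2) (bb (lam D) (lam D ^+ 2 - D) p2 q2 r2 s2)
     (qf 1 (lam D) (lam D ^+ 2 - D) q2 s2) v1 v2 =
  qf a3 b3 c3 (Zc X u1 u2 v1 v2) (Zc Y u1 u2 v1 v2).
  by rewrite -qB -[qf _ _ _ u1 u2]qf_mx22 -[qf _ _ _ v1 v2]qf_mx22; apply: Hc.
have [HB' hm'] := Bp_facts (lam D) D _ _ _ _ _ _ _ _ dS1 dS2.
have [e [f [g [h [de [qa [qb qc]] hk]]]]] := @core _ _ _ _ _ _ _ _ _ _ _ _ _ _ _ w D0 fQ1 fQ2 fQ3 HB HB' hm' o1 o2 hw.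
exists (mx22 e f g h); split; first split.
- by rewrite det_mx22.
- by rewrite Itilde_mx conj_mx22 qa qb qc.
- by rewrite B0kron; apply: mul_mxB.
Qed.
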